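(* Let $\hat\mu$ be a randomized base policy, i.e., a fixed probability distribution on $\mathcal U$ from which, in each slot, the action $\mathbf u$ is drawn independently of the state and of the arrivals; write $\mathbb E^{\hat\mu}$ for expectation over $\mathbf u\sim\hat\mu$. For each $n\in\mathcal N$ and $m\in\mathcal M_n$, let $(\hat\theta_{n,m},\hat V_{n,m})$, with $\hat\theta_{n,m}\in\mathbb R$ and $\hat V_{n,m}:\mathcal Q_{n,m}\to\mathbb R$, satisfy $$\hat\theta_{n,m}+\hat V_{n,m}(Q_{n,m})=\mathbb E^{\hat\mu}[g_{n,m}(Q_{n,m},\mathbf u)]+\sum_{Q'_{n,m}\in\mathcal Q_{n,m}}\mathbb E^{\hat\mu}\big[\Pr[Q'_{n,m}\mid Q_{n,m},\mathbf u]\big]\hat V_{n,m}(Q'_{n,m})\quad\forall Q_{n,m}\in\mathcal Q_{n,m},$$ where $g_{n,m}(Q_{n,m},\mathbf u)=Q_{n,m}+w\,\mathbf 1(u_n=m)p(n,m)$ and $\Pr[Q'_{n,m}\mid Q_{n,m},\mathbf u]$ is the probability that the $(n,m)$-component of the next state equals $Q'_{n,m}$ given current component $Q_{n,m}$ and action $\mathbf u$. Then $\hat\theta=\sum_{n\in\mathcal N}\sum_{m\in\mathcal M_n}\hat\theta_{n,m}$ and $\hat V(\mathbf Q)=\sum_{n\in\mathcal N}\sum_{m\in\mathcal M_n}\hat V_{n,m}(Q_{n,m})$ satisfy $$\hat\theta+\hat V(\mathbf Q)=\mathbb E^{\hat\mu}[g(\mathbf Q,\mathbf u)]+\sum_{\mathbf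 Q'\in\mathcal Q}\mathbb E^{\hat\mu}\big[\Pr[\mathbf Q'\mid\mathbf Q,\mathbf u]\big]\hat V(\mathbf Q')\quad\forall\mathbf Q\in\mathcal Q,$$ i.e., the value function of $\hat\mu$ is additively separable over BS-content pairs.
   Context: Model. Let $N\ge 1$, $\mathcal N=\{0,1,\dots,N\}$ (base station $0$ is the macro base station, MBS) and $\mathcal N^+=\{1,\dots,N\}$ (small base stations, SBSs). Let $\mathcal M=\{1,\dots,M\}$ be the set of contents. For each $n\in\mathcal N$ let $\mathcal M_n\subseteq\mathcal M$ be the set of contents cached at BS $n$, with $\mathcal M_0=\mathcal M$; put $\tilde{\mathcal M}_n=\mathcal M_n\cup\{0\}$ and $\mathcal N_m=\{n\in\mathcal N^+: m\in\mathcal M_n\}$. Powers $p(n,m)\ge 0$ are given for $n\in\mathcal N$, $m\in\mathcal M_n$, and $p(n,0)=0$. A weight $w\ge 0$ is fixed. The feasible action space is $\mathcal U=\{\mathbf u=(u_n)_{n\in\mathcal N}: u_n\in\tilde{\mathcal M}_n\ \forall n,\ u_0\sum_{n\in\mathcal N^+}u_n=0\}$. A state is $\mathbf Q=(Q_{n,m})_{n\in\mathcal N,m\in\mathcal M_n}$ with $Q_{n,m}\in\mathcal Q_{n,m}=\{0,1,\dots,N_{n,m}\}$ for given positive integers $N_{n,m}$; $\mathcal Q=\prod_{n\in\mathcal N}\prod_{m\in\mathcal M_n}\mathcal Q_{n,m}$. Arrivals $A_{n,m}$ ($n\in\mathcal N$, $m\in\mathcal M$) are mutually independent nonnegative-integer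 random variables with fixed distributions, i.i.d. across time slots; $\tilde A_{0,m}=A_{0,m}+\sum_{n\in\mathcal N^+\setminus\mathcal N_m}A_{n,m}$. Given state $\mathbf Q$ and action $\mathbf u$, the next state $\mathbf Q'$ is $Q'_{0,m}=\min\{\mathbf 1(u_0\neq m)Q_{0,m}+\tilde A_{0,m},N_{0,m}\}$ for $m\in\mathcal M_0$ and $Q'_{n,m}=\min\{\mathbf 1(u_0\neq m\text{ and }u_n\neq m)Q_{n,m}+A_{n,m},N_{n,m}\}$ for $n\in\mathcal N^+$, $m\in\mathcal M_n$; $\Pr[\mathbf Q'\mid\mathbf Q,\mathbf u]$ is the induced transition probability. The per-stage cost is $g(\mathbf Q,\mathbf u)=d(\mathbf Q)+w\,p(\mathbf u)$ with $d(\mathbf Q)=\sum_{n\in\mathcal N}\sum_{m\in\mathcal M_n}Q_{n,m}$ and $p(\mathbf u)=\sum_{n\in\mathcal N}p(n,u_n)$. *)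

(* Defs.v *)
From HB Require Import structures.
From mathcomp Require Import all_boot all_order all_algebra.
Set Implicit Arguments. Unset Strict Implicit. Unset Printing Implicit Defensive.
Import Order.TTheory GRing.Theory Num.Theory.
Local Open Scope ring_scope.

(* Conventions: base stations are 'I_(N.+1) (ord0 = MBS); content indices are
   encoded as values of 'I_(M.+1), where 0 (= ord0) means "no content / idle"
   and the contents are 1..M.  Ms n is the cache set M_n (a subset of {1..M}). *)

Section Model.
Variables (R : realFieldType) (N M : nat).
Variable Ms : 'I_(N.+1) -> {set 'I_(M.+1)}.
Variable Nb : 'I_(N.+1) -> 'I_(M.+1) -> nat.

Definition pairT := ('I_(N.+1) * 'I_(M.+1))%type.

Definition vpair (p : pairT) : bool := p.2 \in Ms p.1.

(* A common bound K >= every N_{n,m}; used to size finite types. *)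
Definition Kb : nat := (\max_(p : pairT) Nb p.1 p.2)%N.

Definition actT := {ffun 'I_(N.+1) -> 'I_(M.+1)}.
Definition Uset : {set actT} :=
  [set u : actT | [forall n, (u n == ord0) || (u n \in Ms n)] &&
     ((nat_of_ord (u ord0)) * (\sum_(n | n != ord0) nat_of_ord (u n)) == 0)%N].

(* States Q = (Q_{n,m}) with Q_{n,m} in {0..N_{n,m}}; entries outside the
   BS-content pairs are fixed to 0 (so Qset is in bijection with the product). *)
Definition stT := {ffun pairT -> 'I_(Kb.+1)}.
Definition Qset : {set stT} :=
  [set Q : stT | [forall p, if vpair p then (Q p <= Nb p.1 p.2)%N
                            else (nat_of_ord (Q p) == 0)%N]].

(* Probability mass function on nat: nonnegative and summing to 1
   (the infinite sum written out as a limit of the monotone partial sums). *)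
Definition is_pmf (f : nat -> R) : Prop :=
  (forall k, 0 <= f k) /\ (forall K, \sum_(k < K) f k <= 1) /\
  (forall e, 0 < e -> exists K, 1 - e <= \sum_(k < K) f k).

(* Law of min(A, Kb) for A ~ f, a random variable in {0..Kb}. *)
Definition ptrunc (f : nat -> R) (k : 'I_(Kb.+1)) : R :=
  if (k < Kb)%N then f k else 1 - \sum_(j < Kb) f j.

(* Arrival vectors (A_{n,m}) truncated at Kb (n in N, m in {1..M}; the m = 0
   entries are fixed to 0). Since every N_{n,m} <= Kb, the next state computed
   from the truncated arrivals coincides with the one computed from A. *)
Definition arrT := {ffun pairT -> 'I_(Kb.+1)}.
Definition Bset : {set arrT} :=
  [set B : arrT | [forall n, nat_of_ord (B (n, ord0)) == 0%N]].

Variable a : 'I_(N.+1) -> 'I_(M.+1) -> nat -> R.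

Definition PrB (B : arrT) : R :=
  \prod_(p : pairT | p.2 != ord0) ptrunc (a p.1 p.2) (B p).

Definition Atil0 (m : 'I_(M.+1)) (B : arrT) : nat :=
  (B (ord0, m) + \sum_(n : 'I_(N.+1) | (n != ord0) && (m \notin Ms n)) B (n, m))%N.

Definition nextc (n : 'I_(N.+1)) (m : 'I_(M.+1)) (x : nat) (u : actT) (B : arrT)
  : nat :=
  if n == ord0 then minn ((u ord0 != m) * x + Atil0 m B) (Nb n m)
  else minn (((u ord0 != m) && (u n != m)) * x + B (n, m)) (Nb n m).

Definition Pcomp n m (x : nat) (u : actT) (q' : nat) : R :=
  \sum_(B in Bset) PrB B * (nextc n m x u B == q')%:R.

Definition Ptrans (Q : stT) (u : actT) (Q' : stT) : R :=
  \sum_(B in Bset) PrB B *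
     ([forall p : pairT, vpair p ==> (nextc p.1 p.2 (Q p) u B == Q' p)])%:R.

Variables (pw : 'I_(N.+1) -> 'I_(M.+1) -> R) (w : R).

Definition dcost (Q : stT) : R := (\sum_(p : pairT | vpair p) nat_of_ord (Q p))%:R.
Definition pcost (u : actT) : R := \sum_(n : 'I_(N.+1)) pw n (u n).
Definition gcost (Q : stT) (u : actT) : R := dcost Q + w * pcost u.

Definition gcomp n m (x : nat) (u : actT) : R :=
  x%:R + w * ((u n == m)%:R * pw n m).

Definition is_policy (mu : actT -> R) : Prop :=
  (forall u, 0 <= mu u) /\ (forall u, u \notin Uset -> mu u = 0) /\
  \sum_(u in Uset) mu u = 1.

Definition Emu (mu : actT -> R) (f : actT -> R) : R := \sum_(u in Uset) mu u * f u.

End Model.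

(* Main.v *)
Require Import Defs.
From HB Require Import structures.
From mathcomp Require Import all_boot all_order all_algebra.
Import Order.TTheory GRing.Theory Num.Theory.
Local Open Scope ring_scope.

Theorem lemma4 (R : realFieldType) (N M : nat)
  (Ms : 'I_(N.+1) -> {set 'I_(M.+1)})
  (Nb : 'I_(N.+1) -> 'I_(M.+1) -> nat)
  (a : 'I_(N.+1) -> 'I_(M.+1) -> nat -> R)
  (pw : 'I_(N.+1) -> 'I_(M.+1) -> R) (w : R)
  (mu : actT N M -> R)
  (theta : 'I_(N.+1) -> 'I_(M.+1) -> R)
  (V : 'I_(N.+1) -> 'I_(M.+1) -> nat -> R)
  (HN : (0 < N)%N)
  (HMs0 : Ms ord0 = [set m | m != ord0])
  (HMs : forall n, ord0 \notin Ms n)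
  (HNb : forall n m, m \in Ms n -> (0 < Nb n m)%N)
  (Hpw : forall n m, m \in Ms n -> 0 <= pw n m)
  (Hpw0 : forall n, pw n ord0 = 0)
  (Hw : 0 <= w)
  (Ha : forall n m, m != ord0 -> is_pmf (a n m))
  (Hmu : is_policy Ms mu)
  (Hloc : forall n m, m \in Ms n -> forall q : nat, (q <= Nb n m)%N ->
     theta n m + V n m q =
       Emu Ms mu (gcomp pw w n m q) +
       \sum_(q' < (Nb n m).+1)
          Emu Ms mu (fun u => Pcomp Ms Nb a n m q u q') * V n m q') :
  forall Q, Q \in Qset Ms Nb ->
    (\sum_(p : pairT N M | vpair Ms p) theta p.1 p.2) +
      (\sum_(p : pairT N M | vpair Ms p) V p.1 p.2 (Q p)) =
    Emu Ms mu (gcost (Nb:=Nb) Ms pw w Q) +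
    \sum_(Q' in Qset Ms Nb)
       Emu Ms mu (fun u => Ptrans (Nb:=Nb) Ms a Q u Q') *
       (\sum_(p : pairT N M | vpair Ms p) V p.1 p.2 (Q' p)).
Proof.
move=> Q HQ.
have HQp : forall p : pairT N M, vpair Ms p -> (Q p <= Nb p.1 p.2)%N.
  move=> p vp; move: HQ; rewrite inE => /forallP /(_ p); by rewrite vp.
have HKb : forall n m, (Nb n m <= Kb Nb)%N.
  move=> n m; rewrite /Kb; exact: (@leq_bigmax _ (fun p : pairT N M => Nb p.1 p.2) (n, m)).
have Hnle : forall n m x u B, (nextc (Nb:=Nb) Ms n m x u B <= Nb n m)%N.
  by move=> n m x u B; rewrite /nextc; case: ifP => _; rewrite geq_minr.
pose F (p : pairT N M) u B := V p.1 p.2 (nextc (Nb:=Nb) Ms p.1 p.2 (Q p) u B).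
have stepB : forall p : pairT N M, forall u,
  \sum_(q' < (Nb p.1 p.2).+1) Pcomp Ms Nb a p.1 p.2 (Q p) u q' * V p.1 p.2 q'
  = \sum_(B in Bset Nb) PrB a B * F p u B.
  move=> p u; rewrite /Pcomp.
  under eq_bigr do rewrite mulr_suml.
  rewrite exchange_big /=; apply: eq_bigr => B _.
  under eq_bigr do rewrite -mulrA. rewrite -mulr_sumr; congr (_ * _).
  have Hlt : (nextc (Nb:=Nb) Ms p.1 p.2 (Q p) u B < (Nb p.1 p.2).+1)%N by rewrite ltnS.
  rewrite (bigD1 (Ordinal Hlt)) //= eqxx mul1r big1 ?addr0 //.
  move=> q' Hq'; rewrite (_ : (_ == _) = false) ?mul0r //.
  apply/negbTE; apply: contra Hq' => /eqP e; apply/eqP; apply: val_inj => /=; by rewrite e.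
pose Qn u (B : arrT Nb) : stT Nb :=
  [ffun p => if vpair Ms p then inord (nextc (Nb:=Nb) Ms p.1 p.2 (Q p) u B) else ord0].
have QnQ : forall u B, Qn u B \in Qset Ms Nb.
  move=> u B; rewrite inE; apply/forallP => p; rewrite ffunE.
  by case vp: (vpair Ms p) => /=; rewrite ?inordK ?Hnle // ltnS (leq_trans (Hnle _ _ _ _ _)).
have Qnv : forall u B p, vpair Ms p ->
    nat_of_ord (Qn u B p) = nextc (Nb:=Nb) Ms p.1 p.2 (Q p) u B.
  move=> u B p vp; rewrite ffunE vp inordK // ltnS (leq_trans (Hnle _ _ _ _ _)) //.
have stepA : forall u,
  \sum_(Q' in Qset Ms Nb) Ptrans Ms a Q u Q' *
       (\sum_(p : pairT N M | vpair Ms p) V p.1 p.2 (Q' p))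
  = \sum_(B in Bset Nb) PrB a B * \sum_(p : pairT N M | vpair Ms p) F p u B.
  move=> u; rewrite /Ptrans.
  under eq_bigr do rewrite mulr_suml.
  rewrite exchange_big /=; apply: eq_bigr => B _.
  rewrite (bigD1 (Qn u B)) ?QnQ //= [X in _ + X = _]big1 ?addr0.
    rewrite (_ : [forall p, _] = true) ?mulr1; last first.
      apply/forallP => p; apply/implyP => vp; by rewrite Qnv.
     congr (_ * _); apply: eq_bigr => p vp; by rewrite Qnv.
  move=> Q' /andP [HQ' ne].
  rewrite (_ : [forall p, _] = false) ?mulr0 ?mul0r //.
  apply/negbTE; apply: contra ne => /forallP H; apply/eqP/ffunP => p.
  move: HQ'; rewrite inE => /forallP /(_ p).
  case vp: (vpair Ms p) => HQ'p; apply: val_inj => /=.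
    by rewrite Qnv //; move: (H p); rewrite vp /= => /eqP.
  by rewrite ffunE vp /=; apply/eqP.
have cost : forall u, u \in Uset Ms ->
  \sum_(p : pairT N M | vpair Ms p) gcomp pw w p.1 p.2 (Q p) u = gcost Ms pw w Q u.
  move=> u Hu; rewrite /gcomp big_split /= -mulr_sumr /gcost /dcost natr_sum.
  congr (_ + w * _); rewrite /pcost.
  have := @pair_big_dep R 0 +%R _ _ xpredT (fun n m => m \in Ms n)
     (fun n m => (u n == m)%:R * pw n m).
  rewrite /= /vpair => <-.
  apply: eq_bigr => n _.
  move: Hu; rewrite inE => /andP [/forallP /(_ n) Hn _].
  case Hin: (u n \in Ms n).
    rewrite (bigD1 (u n)) //= eqxx mul1r big1 ?addr0 // => j /andP [_ ne].
    by rewrite eq_sym (negbTE ne) mul0r.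
  rewrite Hin orbF in Hn; rewrite (eqP Hn) Hpw0 big1 // => j jin.
  rewrite (_ : (ord0 == j) = false) ?mul0r //; apply/negbTE; apply: contraNneq (HMs n) => ->.
  exact: jin.
rewrite -big_split /=.
rewrite (eq_bigr (fun p : pairT N M => Emu Ms mu (gcomp pw w p.1 p.2 (Q p)) +
   \sum_(q' < (Nb p.1 p.2).+1)
     Emu Ms mu (fun u => Pcomp Ms Nb a p.1 p.2 (Q p) u q') * V p.1 p.2 q')); last first.
  move=> p vp; exact: Hloc (HQp p vp).
rewrite big_split /=; congr (_ + _).
  rewrite /Emu exchange_big /=; apply: eq_bigr => u Hu.
  by rewrite -mulr_sumr cost.
rewrite (eq_bigr (fun p : pairT N M => \sum_(u in Uset Ms) mu u *
    \sum_(B in Bset Nb) PrB a B * F p u B)); last first.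
  move=> p vp; rewrite /Emu.
  under eq_bigr do rewrite mulr_suml.
  rewrite exchange_big /=; apply: eq_bigr => u _.
  rewrite -stepB mulr_sumr; apply: eq_bigr => q' _; by rewrite mulrA.
rewrite exchange_big /=.
rewrite /Emu.
under [RHS]eq_bigr do rewrite mulr_suml.
rewrite [RHS]exchange_big /=; apply: eq_bigr => u _.
rewrite -mulr_sumr.
under [RHS]eq_bigr do rewrite -mulrA.
rewrite -mulr_sumr stepA; congr (_ * _).
rewrite exchange_big /=; apply: eq_bigr => B _; by rewrite mulr_sumr.
Qed.
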